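(* Let $\{c_n\}_{n\ge1}$ be a real sequence, $\{d_{n+1}\}_{n\ge1}$ a positive chain sequence, and let $P_0(x)=1$, $P_1(x)=x-c_1$, $P_{n+1}(x)=(x-c_{n+1})P_n(x)-d_{n+1}(x^2+1)P_{n-1}(x)$ for $n\ge1$. Then the zeros $x_j^{(n)}$, $j=1,\dots,n$, of $P_n$ are real and simple, and, ordering them so that $x_n^{(n)}<x_{n-1}^{(n)}<\dots<x_1^{(n)}$, they interlace: \[ x_{n+1}^{(n+1)}<x_n^{(n)}<x_n^{(n+1)}<\dots<x_2^{(n+1)}<x_1^{(n)}<x_1^{(n+1)},\qquad n\ge1 . \]
   Context: A sequence $\{d_{n+1}\}_{n\ge1}$ is a positive chain sequence if there is a sequence $\{g_{n+1}\}_{n\ge0}$ with $0\le g_1<1$, $0<g_n<1$ for $n\ge2$, and $d_{n+1}=(1-g_n)g_{n+1}$ for $n\ge1$. *)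

(* Defs.v *)
From HB Require Import structures.
From mathcomp Require Import all_boot all_order all_algebra.
From mathcomp Require Import reals.
Set Implicit Arguments. Unset Strict Implicit. Unset Printing Implicit Defensive.
Import Order.TTheory GRing.Theory Num.Theory.
Local Open Scope ring_scope.

(* Only the values d (n.+1), n >= 1, are relevant. *)
Definition positive_chain_sequence (R : realType) (d : nat -> R) : Prop :=
  exists g : nat -> R,
    [/\ 0 <= g 1%N, g 1%N < 1,
        (forall n : nat, (2 <= n)%N -> 0 < g n /\ g n < 1) &
        (forall n : nat, (1 <= n)%N -> d n.+1 = (1 - g n) * g n.+1)].

Fixpoint Pseq (R : realType) (c d : nat -> R) (n : nat) : {poly R} :=
  match n with
  | 0 => 1
  | 1 => 'X - (c 1%N)%:P
  | (m.+1 as k).+1 =>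
      ('X - (c k.+1)%:P) * Pseq c d k - (d k.+1)%:P * ('X ^+ 2 + 1) * Pseq c d m
  end.

(* Main.v *)
Require Import Defs.
From HB Require Import structures.
From mathcomp Require Import all_boot all_order all_algebra.
From mathcomp Require Import reals polyrcf.
From mathcomp Require Import ring lra zify.
From Stdlib Require Import ClassicalEpsilon.
Import Order.TTheory GRing.Theory Num.Theory.
Local Open Scope ring_scope.

Section Main.
Variables (R : realType) (c d g : nat -> R).
Hypotheses (g1ge0 : 0 <= g 1%N) (g1lt1 : g 1%N < 1)
  (gH : forall n : nat, (2 <= n)%N -> 0 < g n /\ g n < 1)
  (dH : forall n : nat, (1 <= n)%N -> d n.+1 = (1 - g n) * g n.+1).

Local Notation P := (Pseq c d).

Lemma PS m : P m.+2 = ('X - (c m.+2)%:P) * P m.+1 - (d m.+2)%:P * ('X ^+ 2 + 1) * P m.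
Proof. by []. Qed.

Lemma glt1 n : (1 <= n)%N -> g n < 1.
Proof. case: n => [//|[_|n _]]; first exact: g1lt1. by have [] := gH n.+2 isT. Qed.

Lemma gpos n : (2 <= n)%N -> 0 < g n.
Proof. by move=> /gH []. Qed.

Lemma dpos m : 0 < d m.+2.
Proof.
rewrite dH //; apply: mulr_gt0; last exact: gpos.
by rewrite subr_gt0 glt1.
Qed.

Fixpoint L (n : nat) : R :=
  match n with 0 => 1 | 1 => 1 | (m.+1 as k).+1 => L k - d k.+1 * L m end.

Lemma Lpos_aux n : 0 < L n /\ (1 - g n.+1) * L n <= L n.+1.
Proof.
elim: n => [|n [IH1 IH2]].
  by split => //=; rewrite mulr1 lerBlDr lerDl.
have h1 : 0 < 1 - g n.+1 by rewrite subr_gt0 glt1.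
have L1 : 0 < L n.+1 by apply: lt_le_trans IH2; apply: mulr_gt0.
split => //.
have -> : L n.+2 = L n.+1 - d n.+2 * L n by [].
rewrite dH // -mulrA.
have g2 : 0 < g n.+2 by apply: gpos.
have H : g n.+2 * ((1 - g n.+1) * L n) <= g n.+2 * L n.+1 by rewrite ler_pM2l.
move: H; rewrite !mulrBl !mulrBr ?mul1r ?mulr1; lra.
Qed.

Lemma Lpos n : 0 < L n.
Proof. exact: (Lpos_aux n).1. Qed.

Lemma Pcoef_aux n : ((size (P n) <= n.+1)%N /\ (P n)`_n = L n) /\
                    ((size (P n.+1) <= n.+2)%N /\ (P n.+1)`_n.+1 = L n.+1).
Proof.
elim: n => [|n [[IHs IHc] [IHs' IHc']]].
  split; first by rewrite /= size_poly1 coefC.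
  by rewrite /= size_XsubC coefB coefX coefC /= subr0.
split; first by []. rewrite PS; split.
  apply: leq_trans (size_polyD _ _) _; rewrite size_polyN geq_max.
  apply/andP; split.
    apply: leq_trans (size_polyMleq _ _) _; rewrite size_XsubC /=.
    by [].
  rewrite -mulrA mul_polyC; apply: leq_trans (size_scale_leq _ _) _.
  apply: leq_trans (size_polyMleq _ _) _.
  have h3 : (size (('X ^+ 2 + 1)%R : {poly R}) <= 3)%N.
    by apply: leq_trans (size_polyD _ _) _; rewrite size_polyXn size_poly1.
  rewrite -subn1 leq_subLR; apply: leq_trans (leq_add h3 IHs) _; lia.
have e : L n.+2 = L n.+1 - d n.+2 * L n by [].
rewrite e; move: (L n) (L n.+1) IHc IHc' => l0 l1 IHc IHc'.
rewrite coefB mulrBl coefB coefXM coefCM /=.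
rewrite (nth_default 0 IHs') mulr0 subr0 IHc'.
rewrite -mulrA coefCM mulrDl mul1r coefD coefXnM /=.
rewrite !subSS subn0 (nth_default 0 (leq_trans IHs (leqnSn _))) addr0 IHc //.
Qed.

Lemma Psize n : size (P n) = n.+1 /\ lead_coef (P n) = L n.
Proof.
have [hs hc] := (Pcoef_aux n).1.
have : (n < size (P n))%N.
  rewrite ltnNge; apply/negP => /(nth_default 0); rewrite -/(P n)`_n hc => h.
  by have := Lpos n; rewrite h ltxx.
move=> hn; have e : size (P n) = n.+1 by apply/eqP; rewrite eqn_leq hs hn.
by split => //; rewrite lead_coefE e.
Qed.

Lemma prod_sign (a : nat -> R) y (s : seq nat) : (forall i, i \in s -> a i != y) ->
  0 < (-1) ^+ (count (fun i => y < a i) s) * \prod_(i <- s) (y - a i).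
Proof.
elim: s => [|i s IH] H; first by rewrite big_nil mulr1 expr0.
have IH' := IH (fun k ks => H k (@mem_behead _ (i :: s) k ks)).
have ai : a i != y := H i (mem_head _ _).
rewrite big_cons /=.
case: (ltgtP y (a i)) => h /=.
- rewrite add1n exprS.
  have -> : -1 * (-1) ^+ count (fun i0 : nat => y < a i0) s * ((y - a i) * \prod_(j <- s) (y - a j))
     = ((-1) ^+ count (fun i0 : nat => y < a i0) s * \prod_(j <- s) (y - a j)) * (a i - y) by ring.
  by apply: mulr_gt0 => //; rewrite subr_gt0.
- rewrite add0n.
  have -> : (-1) ^+ count (fun i0 : nat => y < a i0) s * ((y - a i) * \prod_(j <- s) (y - a j))
     = ((-1) ^+ count (fun i0 : nat => y < a i0) s * \prod_(j <- s) (y - a j)) * (y - a i) by ring.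
  by apply: mulr_gt0 => //; rewrite subr_gt0.
- by rewrite h eqxx in ai.
Qed.

Lemma sign_pos (a : nat -> R) n j y :
 (forall i k, (1 <= i)%N -> (i < k)%N -> (k <= n)%N -> a k < a i) ->
 (1 <= j <= n.+1)%N -> ((j <= n)%N -> a j < y) -> ((1 < j)%N -> y < a j.-1) ->
 0 < (-1) ^+ j.-1 * \prod_(i <- iota 1 n) (y - a i).
Proof.
move=> mono /andP[j1 jn] hlo hhi.
have side i : (1 <= i <= n)%N -> ((i < j)%N -> y < a i) /\ ((j <= i)%N -> a i < y).
  move=> /andP[i1 i_n]; split => hij.
  - apply: lt_le_trans (hhi _) _; first lia.
    have [e|ne] := eqVneq i j.-1; first by rewrite -e.
    apply: ltW; apply: mono => //; lia.
  - apply: le_lt_trans _ (hlo _); last lia.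
    have [e|ne] := eqVneq j i; first by rewrite -e.
    apply: ltW; apply: mono => //; lia.
have -> : j.-1 = count (fun i => y < a i) (iota 1 n).
  have e : iota 1 n = iota 1 j.-1 ++ iota (1 + j.-1) (n - j.-1).
    by rewrite -iotaD subnKC //; lia.
  rewrite e count_cat.
  rewrite (@eq_in_count _ _ predT (iota 1 j.-1)); last first.
    move=> i; rewrite mem_iota => hi /=; apply/idP; apply: (side i _).1; lia.
  rewrite (@eq_in_count _ _ pred0 (iota (1 + j.-1) (n - j.-1))); last first.
    move=> i; rewrite mem_iota => hi /=; apply/negbTE; rewrite -leNgt.
    apply: ltW; apply: (side i _).2; lia.
  by rewrite count_predT count_pred0 size_iota addn0.
apply: prod_sign => i; rewrite mem_iota => hi.
have [hij|hij] := ltnP i j.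
  by rewrite gt_eqF //; apply: (side i _).1; lia.
by rewrite lt_eqF //; apply: (side i _).2; lia.
Qed.

Definition Inv n (a : nat -> R) :=
 [/\ forall i k, (1 <= i)%N -> (i < k)%N -> (k <= n)%N -> a k < a i,
     P n = L n *: \prod_(i <- iota 1 n) ('X - (a i)%:P)
   & forall j, (1 <= j <= n)%N -> 0 < (-1) ^+ j.-1 * (P n.-1).[a j]].

Lemma Inv1 : Inv 1 (fun _ => c 1%N).
Proof.
split.
- move=> i k *; lia.
- by rewrite /= big_seq1 scale1r.
- move=> j /andP[j1 jn]; have -> : j = 1%N by lia.
  by rewrite /= hornerC expr0 mul1r ltr01.
Qed.

Lemma eval_fact n a y : Inv n a -> (P n).[y] = L n * \prod_(i <- iota 1 n) (y - a i).
Proof.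
case=> _ -> _; rewrite hornerZ horner_prod.
by under eq_bigr do rewrite hornerXsubC.
Qed.

Lemma root_fact n a j : Inv n a -> (1 <= j <= n)%N -> (P n).[a j] = 0.
Proof.
move=> Ia hj; rewrite (eval_fact _ _ _ Ia); apply/eqP; rewrite mulf_eq0 prodf_seq_eq0.
apply/orP; right; apply/hasP; exists j; first by rewrite mem_iota; lia.
by rewrite subrr eqxx.
Qed.

Lemma step m a : Inv m.+1 a -> exists b, Inv m.+2 b /\
   (forall j, (1 <= j <= m.+1)%N -> b j.+1 < a j /\ a j < b j).
Proof.
move=> Ia; have [mono fa sa] := Ia.
have [sizep lcp] := Psize m.+2.
set p := P m.+2 in sizep lcp *.
have F1 j : (1 <= j <= m.+1)%N -> 0 < (-1) ^+ j * p.[a j].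
  move=> hj; have r := root_fact _ _ _ Ia hj; have s := sa j hj.
  rewrite /p PS !hornerE r.
  case: j hj s {r} => // j hj s /=; rewrite /= in s.
  have hx : 0 < a j.+1 ^+ 2 + 1 by have := sqr_ge0 (a j.+1); lra.
  have hd := dpos m.
  have -> : (-1) ^+ j.+1 * ((a j.+1 - c m.+2) * 0 - d m.+2 * (a j.+1 ^+ 2 + 1) * (P m).[a j.+1])
     = (d m.+2 * (a j.+1 ^+ 2 + 1)) * ((-1) ^+ j * (P m).[a j.+1]) by rewrite exprS; ring.
  by apply: mulr_gt0 => //; apply: mulr_gt0.
have [Mp [hMp1 hMp2]] : exists M, a 1%N < M /\ 0 < p.[M].
  have lp : 0 < lead_coef p by rewrite lcp Lpos.
  have [N HN] := poly_pinfty_gt_lc lp.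
  exists (Num.max N (a 1%N + 1)); split.
    by rewrite lt_max; apply/orP; right; rewrite ltrDl.
  apply: lt_le_trans (HN _ _); first by rewrite lcp Lpos.
  by rewrite le_max lexx.
have [Mn [hMn1 hMn2]] : exists M, M < a m.+1 /\ 0 < (-1) ^+ m.+2 * p.[M].
  pose q := ((-1) ^+ m.+2) *: (p \Po - 'X).
  have lq : lead_coef q = L m.+2.
    rewrite lead_coefZ lead_coef_comp ?size_polyN ?size_polyX // lead_coefN lead_coefX sizep lcp /=.
    by rewrite mulrCA -exprMn mulrN1 opprK expr1n mulr1.
  have lp : 0 < lead_coef q by rewrite lq Lpos.
  have [N HN] := poly_pinfty_gt_lc lp.
  exists (- Num.max N (1 - a m.+1)); split.
    rewrite ltrNl lt_max; apply/orP; right; lra.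
  have := HN (Num.max N (1 - a m.+1)); rewrite le_max lexx /= => /(_ isT).
  rewrite /q hornerZ horner_comp hornerN hornerX => h.
  by apply: lt_le_trans h; rewrite lq Lpos.
pose lo j := if (j <= m.+1)%N then a j else Mn.
pose hi j := if (1 < j)%N then a j.-1 else Mp.
have H j : exists y, (1 <= j <= m.+2)%N -> root p y /\ lo j < y /\ y < hi j.
  case hj : (1 <= j <= m.+2)%N; last by exists 0.
  have slo : 0 < (-1) ^+ j * p.[lo j].
    rewrite /lo; case: ifP => h; first by apply: F1; lia.
    by have -> : j = m.+2 by lia.
  have shi : 0 < (-1) ^+ j.-1 * p.[hi j].
    rewrite /hi; case: ifP => h.
      apply: F1; lia.
    have -> : j = 1%N by lia.
    by rewrite /= expr0 mul1r.
  have hlh : lo j < hi j.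
    rewrite /lo /hi; case: ifP => h1; case: ifP => h2.
    - apply: mono; lia.
    - by have -> : j = 1%N by lia.
    - have -> : j = m.+2 by lia. done.
    - lia.
  have hs : p.[lo j] * p.[hi j] < 0.
    case: j hj slo shi hlh => // j hj slo shi hlh.
    rewrite exprS /= in slo shi.
    have := mulr_gt0 slo shi.
    have -> : -1 * (-1) ^+ j * p.[lo j.+1] * ((-1) ^+ j * p.[hi j.+1])
       = - (((-1) ^+ j) ^+ 2 * (p.[lo j.+1] * p.[hi j.+1])) by ring.
    by rewrite -exprM mulnC exprM sqrrN expr1n expr1n mul1r oppr_gt0.
  have [y hy ry] := poly_ivtoo (ltW hlh) hs.
  exists y => _; split => //; move: hy; rewrite in_itv /= => /andP[-> ->].
  done.
pose b j := proj1_sig (constructive_indefinite_description _ (H j)).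
have Hb j : (1 <= j <= m.+2)%N -> root p (b j) /\ lo j < b j /\ b j < hi j.
  exact: (proj2_sig (constructive_indefinite_description _ (H j))).
have inter j : (1 <= j <= m.+1)%N -> b j.+1 < a j /\ a j < b j.
  move=> hj; have [_ [_ h1]] := Hb j.+1 ltac:(lia).
  have [_ [h2 _]] := Hb j ltac:(lia).
  move: h1 h2; rewrite /lo /hi /=.
  have -> : (1 < j.+1)%N by lia.
  by have -> : (j <= m.+1)%N by lia.
have monob i k : (1 <= i)%N -> (i < k)%N -> (k <= m.+2)%N -> b k < b i.
  move=> i1 ik km.
  have [_ [_ h1]] := Hb k ltac:(lia).
  have [_ [h2 _]] := Hb i ltac:(lia).
  move: h1 h2; rewrite /lo /hi.
  have -> : (1 < k)%N by lia.
  have -> : (i <= m.+1)%N by lia.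
  move=> h1 h2; apply: lt_trans h1 _; apply: le_lt_trans _ h2.
  have [e|ne] := eqVneq i k.-1; first by rewrite -e.
  apply: ltW; apply: mono => //; lia.
exists b; split => //; split => //.
- pose rs := [seq b i | i <- iota 1 m.+2].
  have [q hq] : exists q, p = q * \prod_(z <- rs) ('X - z%:P).
    apply: uniq_roots_prod_XsubC.
      apply/allP => y /mapP [i]; rewrite mem_iota => hii ->.
      by have [] := Hb i ltac:(lia).
    rewrite uniq_rootsE map_inj_in_uniq ?iota_uniq //.
    move=> i k; rewrite !mem_iota => hii hk e.
    apply/eqP; apply/negPn/negP => ne.
    have [h|h] := ltnP i k.
      by have := monob i k ltac:(lia) h ltac:(lia); rewrite e ltxx.
    have h' : (k < i)%N by rewrite ltn_neqAle h andbT eq_sym.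
    by have := monob k i ltac:(lia) h' ltac:(lia); rewrite e ltxx.
  rewrite big_map in hq.
  have pn0 : p != 0 by rewrite -size_poly_gt0 sizep.
  have qn0 : q != 0 by apply/eqP => q0; move: pn0; rewrite hq q0 mul0r eqxx.
  have sq : size q = 1%N.
    move: sizep; rewrite hq size_Mmonic ?monic_prod_XsubC // size_prod_XsubC size_iota.
    by rewrite addnS /= => e; apply/eqP; rewrite -(eqn_add2r m.+2) e.
  have /size_poly1P [k _ hk] : size q == 1%N by rewrite sq.
  have ek : k = L m.+2.
    by rewrite -lcp hq hk lead_coef_Mmonic ?monic_prod_XsubC // lead_coefC.
  by rewrite -/p hq hk ek mul_polyC.
- move=> j hj /=.
  rewrite (eval_fact _ _ _ Ia) mulrCA; apply: mulr_gt0; first exact: Lpos.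
  have [_ [h1 h2]] := Hb j hj.
  apply: (sign_pos a m.+1 j (b j) mono hj).
    by move=> hjm; move: h1; rewrite /lo hjm.
  by move=> hj1; move: h2; rewrite /hi hj1.
Qed.

Fixpoint seqX (k : nat) : {a : nat -> R | Inv k.+1 a} :=
  match k with
  | 0 => exist _ (fun _ => c 1%N) Inv1
  | k'.+1 => let s := seqX k' in
      let e := constructive_indefinite_description _ (step k' (proj1_sig s) (proj2_sig s)) in
      exist _ (proj1_sig e) (proj1 (proj2_sig e))
  end.

Lemma seqX_inter k j : (1 <= j <= k.+1)%N ->
  proj1_sig (seqX k.+1) j.+1 < proj1_sig (seqX k) j /\ proj1_sig (seqX k) j < proj1_sig (seqX k.+1) j.
Proof.
move=> hj.
exact: (proj2 (proj2_sig (constructive_indefinite_description _ (step k _ (proj2_sig (seqX k))))) j hj).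
Qed.

Lemma main_sec : exists x : nat -> nat -> R,
    (forall n : nat, (1 <= n)%N ->
       [/\ size (Pseq c d n) = n.+1,
           (forall j : nat, (1 <= j <= n)%N -> root (Pseq c d n) (x n j)) &
           (forall j : nat, (1 <= j < n)%N -> x n j.+1 < x n j)]) /\
    (forall n : nat, (1 <= n)%N ->
       forall j : nat, (1 <= j <= n)%N ->
         x n.+1 j.+1 < x n j /\ x n j < x n.+1 j).
Proof.
exists (fun n j => proj1_sig (seqX n.-1) j); split.
- case=> // k _ /=.
  have I := proj2_sig (seqX k); have [mono _ _] := I.
  split; first exact: (Psize k.+1).1.
  + by move=> j hj; apply/eqP; apply: (root_fact _ _ _ I).
  + move=> j hj; apply: mono; lia.
- case=> // k _ j hj /=; exact: seqX_inter.
Qed.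

End Main.

Theorem theorem2p2 (R : realType) (c d : nat -> R) :
  positive_chain_sequence d ->
  exists x : nat -> nat -> R,
    (forall n : nat, (1 <= n)%N ->
       [/\ size (Pseq c d n) = n.+1,
           (forall j : nat, (1 <= j <= n)%N -> root (Pseq c d n) (x n j)) &
           (forall j : nat, (1 <= j < n)%N -> x n j.+1 < x n j)]) /\
    (forall n : nat, (1 <= n)%N ->
       forall j : nat, (1 <= j <= n)%N ->
         x n.+1 j.+1 < x n j /\ x n j < x n.+1 j).
Proof.
move=> [g [h1 h2 h3 h4]]; exact: (main_sec _ c d g h1 h2 h3 h4).
Qed.
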